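(* In a phase space $Z_1$, every real number $\mu$ is the exponential growth rate of some solution of the linearized Euler system with initial value in $Z_1$ (i.e. the set of finite exponential growth rates of such solutions is $\mathbb{R}$). Moreover, there exist initial values in $Z_1$ for which the exponential growth rate of the corresponding solution equals $+\infty$.
   Context: Fix constants $U_0,c_0,\rho_0>0$. Linearized Euler system: $\partial_t v_x' + U_0\partial_x v_x' + \frac1{\rho_0}\partial_x p' = 0$, $\partial_t v_y' + U_0\partial_x v_y' + \frac1{\rho_0}\partial_y p' = 0$, $\partial_t v_z' + U_0\partial_x v_z' + \frac1{\rho_0}\partial_z p' = 0$, $\partial_t p' + U_0\partial_xp' + \rho_0c_0^2(\partial_xv_x'+\partial_yv_y'+\partial_zv_z') = 0$. Phase space $Z_1$: fix real constants $k_i,l_i,m_i$ ($i=1,\dots,4$) with $k_1k_2k_3k_4\neq0$ and $\Delta = \frac{c_0\rho_0}{k_3k_4}[r_1(k_2k_3k_4+k_3m_2m_4+k_4l_2l_3) + r_2(k_1k_3k_4+k_3m_1m_4+k_4l_1l_3)]\neq0$, $r_i=\sqrt{k_i^2+l_i^2+m_i^2}$. With $\xi_i=k_ix+l_iy+m_iz$, $Z_1$ is the set of systems $(F,G,H,P)$ of the form $F = k_1f_1(\xi_1)+k_2f_2(\xi_2)+\frac{l_3}{k_3}f_3(\xi_3)+\frac{m_4}{k_4}f_4(\xi_4)$, $G = l_1f_1(\xi_1)+l_2f_2(\xi_2)-f_3(\xi_3)$, $H = m_1f_1(\xi_1)+m_2f_2(\xi_2)-f_4(\xi_4)$, $P =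 -c_0\rho_0r_1f_1(\xi_1)+c_0\rho_0r_2f_2(\xi_2)$ with $f_i:\mathbb{R}\to\mathbb{R}$ continuously differentiable, with the topology of uniform convergence on $\mathbb{R}^3$. The exponential growth rate of a solution $(v_x',v_y',v_z',p')$ is $\nu = \max\{\sup_{(x,y,z)}\limsup_{t\to\infty}\frac{\ln|v_x'(x,y,z,t)|}{t},\ \text{same for } v_y',\ v_z',\ p'\}$. *)

(* Defs.v *)
From HB Require Import structures.
From mathcomp Require Import all_boot all_order all_algebra.
From mathcomp Require Import all_classical all_reals all_analysis.
Set Implicit Arguments. Unset Strict Implicit. Unset Printing Implicit Defensive.
Import Order.TTheory GRing.Theory Num.Theory.
Import numFieldNormedType.Exports.
Local Open Scope classical_set_scope.
Local Open Scope ring_scope.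

Section Defs.
Variable R : realType.

(* A field on space-time: (x, y, z, t) |-> value. *)
Definition field4 := R -> R -> R -> R -> R.
Definition field3 := R -> R -> R -> R.

Definition dx (u : field4) : field4 := fun x y z t => derive1 (fun s => u s y z t) x.
Definition dy (u : field4) : field4 := fun x y z t => derive1 (fun s => u x s z t) y.
Definition dz (u : field4) : field4 := fun x y z t => derive1 (fun s => u x y s t) z.
Definition dt (u : field4) : field4 := fun x y z t => derive1 (fun s => u x y z s) t.

Definition uncurry4 (u : field4) : R * R * R * R -> R :=
  fun p => u p.1.1.1 p.1.1.2 p.1.2 p.2.

Definition C1_4 (u : field4) : Prop :=
  (forall x y z t,
     derivable (fun s => u s y z t) x 1 /\ derivable (fun s => u x s z t) y 1 /\
     derivable (fun s => u x y s t) z 1 /\ derivable (fun s => u x y z s) t 1) /\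
  continuous (uncurry4 u) /\
  continuous (uncurry4 (dx u)) /\ continuous (uncurry4 (dy u)) /\
  continuous (uncurry4 (dz u)) /\ continuous (uncurry4 (dt u)).

Definition lin_euler_solution (U0 c0 rho0 : R) (vx vy vz p : field4) : Prop :=
  C1_4 vx /\ C1_4 vy /\ C1_4 vz /\ C1_4 p /\
  forall x y z t,
    dt vx x y z t + U0 * dx vx x y z t + rho0^-1 * dx p x y z t = 0 /\
    dt vy x y z t + U0 * dx vy x y z t + rho0^-1 * dy p x y z t = 0 /\
    dt vz x y z t + U0 * dx vz x y z t + rho0^-1 * dz p x y z t = 0 /\
    dt p x y z t + U0 * dx p x y z t
      + rho0 * c0 ^+ 2 * (dx vx x y z t + dy vy x y z t + dz vz x y z t) = 0.

Definition has_initial_value (vx vy vz p : field4) (F G H P : field3) : Prop :=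
  forall x y z, vx x y z 0 = F x y z /\ vy x y z 0 = G x y z /\
                vz x y z 0 = H x y z /\ p x y z 0 = P x y z.

Definition eln_abs (a : R) : \bar R :=
  if a == 0 then -oo%E else (ln `|a|)%:E.

Definition limsup_pinfty (g : R -> \bar R) : \bar R :=
  limf_esup g (pinfty_nbhs R).

Definition growth_comp (u : field4) : \bar R :=
  ereal_sup [set limsup_pinfty
                   (fun t => (eln_abs (u q.1.1 q.1.2 q.2 t) * (t^-1)%:E)%E)
            | q in [set: R * R * R] ].

Definition growth_rate (vx vy vz p : field4) : \bar R :=
  Order.max (Order.max (growth_comp vx) (growth_comp vy))
            (Order.max (growth_comp vz) (growth_comp p)).

Definition C1_1 (f : R -> R) : Prop :=
  (forall s, derivable f s 1) /\ continuous (derive1 f).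

Definition rnorm (k l m : R) : R := Num.sqrt (k ^+ 2 + l ^+ 2 + m ^+ 2).

Definition Delta_Z1 (c0 rho0 k1 k2 k3 k4 l1 l2 l3 l4 m1 m2 m3 m4 : R) : R :=
  c0 * rho0 / (k3 * k4) *
  (rnorm k1 l1 m1 * (k2 * k3 * k4 + k3 * m2 * m4 + k4 * l2 * l3)
   + rnorm k2 l2 m2 * (k1 * k3 * k4 + k3 * m1 * m4 + k4 * l1 * l3)).

Definition in_Z1 (c0 rho0 k1 k2 k3 k4 l1 l2 l3 l4 m1 m2 m3 m4 : R)
    (F G H P : field3) : Prop :=
  exists f1 f2 f3 f4 : R -> R,
    C1_1 f1 /\ C1_1 f2 /\ C1_1 f3 /\ C1_1 f4 /\
    (let xi1 x y z := k1 * x + l1 * y + m1 * z in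
    let xi2 x y z := k2 * x + l2 * y + m2 * z in
    let xi3 x y z := k3 * x + l3 * y + m3 * z in
    let xi4 x y z := k4 * x + l4 * y + m4 * z in
    (forall x y z,
      F x y z = k1 * f1 (xi1 x y z) + k2 * f2 (xi2 x y z)
                + l3 / k3 * f3 (xi3 x y z) + m4 / k4 * f4 (xi4 x y z)) /\
    (forall x y z,
      G x y z = l1 * f1 (xi1 x y z) + l2 * f2 (xi2 x y z) - f3 (xi3 x y z)) /\
    (forall x y z,
      H x y z = m1 * f1 (xi1 x y z) + m2 * f2 (xi2 x y z) - f4 (xi4 x y z)) /\
    (forall x y z,
      P x y z = - (c0 * rho0 * rnorm k1 l1 m1) * f1 (xi1 x y z)
                + c0 * rho0 * rnorm k2 l2 m2 * f2 (xi2 x y z))).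
End Defs.

(* Main.v *)
Require Import Defs.
From HB Require Import structures.
From mathcomp Require Import all_boot all_order all_algebra.
From mathcomp Require Import all_classical all_reals all_analysis.
From mathcomp Require Import ring lra.
Import Order.TTheory GRing.Theory Num.Theory.
Import numFieldNormedType.Exports.
Local Open Scope ring_scope.
Local Open Scope classical_set_scope.

Section S.
Variable R : realType.

Lemma lin_deriv (g : R -> R) (dg : forall s, derivable g s 1) (a K c x : R) :
  derivable (fun s => c * g (a * s + K)) x 1 /\
  derive1 (fun s => c * g (a * s + K)) x = c * a * derive1 g (a * x + K).
Proof.
have hf : is_derive x 1 (fun s : R => a * s + K) a.
  have := @is_deriveD R R R (fun s => a * s) (cst K) x 1 a 0.
  rewrite addr0. apply. 
  have := @is_deriveZ R R R id a x 1 1. rewrite /GRing.scale /= mulr1. apply.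
have dfx : derivable (fun s : R => a * s + K) x 1 by case: hf.
have dgc : derivable (g \o (fun s : R => a * s + K)) x 1.
  apply/derivable1_diffP; apply: differentiable_comp; apply/derivable1_diffP => //.
have hc := derive1_comp dfx (dg _).
have ea : derive1 (fun s : R => a * s + K) x = a by rewrite derive1E derive_val.
rewrite ea in hc.
have hgc : is_derive x 1 (g \o (fun s : R => a * s + K)) (derive1 g (a * x + K) * a).
  rewrite -hc derive1E; exact: derivableP.
have := @is_deriveZ R R R _ c x 1 _ hgc.
move=> [d e]; split.
  exact: d.
rewrite derive1E e /GRing.scale /=; ring.
Qed.
Lemma cont4 (h : R -> R) (hc : continuous h) (C a b d e : R) :
 continuous (uncurry4 (fun x y z t => C * h (a*x + b*y + d*z + e*t))).
Proof.
move=> p; rewrite /uncurry4 /=.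
have c1 : {for p, continuous (fun q : R*R*R*R => q.1.1.1)}.
  apply: (@continuous_comp _ _ _ (fun q : R*R*R*R => q.1.1) fst).
  apply: (@continuous_comp _ _ _ fst fst); exact: cvg_fst.
  exact: cvg_fst.
have c2 : {for p, continuous (fun q : R*R*R*R => q.1.1.2)}.
  apply: (@continuous_comp _ _ _ (fun q : R*R*R*R => q.1.1) snd).
  apply: (@continuous_comp _ _ _ fst fst); exact: cvg_fst.
  exact: cvg_snd.
have c3 : {for p, continuous (fun q : R*R*R*R => q.1.2)}.
  apply: (@continuous_comp _ _ _ fst snd); [exact: cvg_fst| exact: cvg_snd].
have c4 : {for p, continuous (fun q : R*R*R*R => q.2)} by exact: cvg_snd.
have cc : forall k : R, {for p, continuous (fun _ : R*R*R*R => k)}.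
  by move=> k; exact: cvg_cst.
have hL : {for p, continuous (fun q : R*R*R*R => a*q.1.1.1 + b*q.1.1.2 + d*q.1.2 + e*q.2)}.
  apply: continuousD; [apply: continuousD; [apply: continuousD|]|];
  apply: continuousM => //.
apply: continuousM; first exact: cc.
exact: (continuous_comp hL (hc _)).
Qed.

Lemma lin_sec (g : R -> R) (dg : forall s, derivable g s 1) (a K c x : R)
  (phi : R -> R) (hphi : forall s, phi s = a * s + K) :
  derivable (fun s => c * g (phi s)) x 1 /\
  derive1 (fun s => c * g (phi s)) x = c * a * derive1 g (phi x).
Proof.
have -> : phi = fun s => a * s + K by apply: funext.
exact: lin_deriv.
Qed.

Definition lin4 (g : R -> R) (c a b d e : R) : field4 R :=
  fun x y z t => c * g (a*x + b*y + d*z + e*t).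

Lemma lin4_parts (g : R -> R) (dg : forall s, derivable g s 1) (c a b d e : R) x y z t :
  let xi := a*x + b*y + d*z + e*t in
  (derivable (fun s => lin4 g c a b d e s y z t) x 1 /\
   dx (lin4 g c a b d e) x y z t = c * a * derive1 g xi) /\
  (derivable (fun s => lin4 g c a b d e x s z t) y 1 /\
   dy (lin4 g c a b d e) x y z t = c * b * derive1 g xi) /\
  (derivable (fun s => lin4 g c a b d e x y s t) z 1 /\
   dz (lin4 g c a b d e) x y z t = c * d * derive1 g xi) /\
  (derivable (fun s => lin4 g c a b d e x y z s) t 1 /\
   dt (lin4 g c a b d e) x y z t = c * e * derive1 g xi).
Proof.
rewrite /dx /dy /dz /dt /lin4 /=.
split; [|split; [|split]].
- by apply: (@lin_sec g dg _ (b*y + d*z + e*t)) => s; ring.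
- by apply: (@lin_sec g dg _ (a*x + d*z + e*t)) => s; ring.
- by apply: (@lin_sec g dg _ (a*x + b*y + e*t)) => s; ring.
- by apply: (@lin_sec g dg _ (a*x + b*y + d*z)) => s; ring.
Qed.

Lemma lin4_C1 (g : R -> R) (hg : C1_1 g) (c a b d e : R) :
  C1_4 (lin4 g c a b d e).
Proof.
case: hg => dg cg.
have gc : continuous g.
  move=> s; apply: differentiable_continuous; apply/derivable1_diffP; exact: dg.
split.
  move=> x y z t; have [[? _] [[? _] [[? _] [? _]]]] := lin4_parts g dg c a b d e x y z t.
  by split.
split; first exact: cont4.
have P := lin4_parts g dg c a b d e.
split.
  have -> : dx (lin4 g c a b d e) = fun x y z t => (c*a) * derive1 g (a*x + b*y + d*z + e*t).
    by apply: funext => x; apply: funext => y; apply: funext => z; apply: funext => t;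
       have [[_ ->] _] := P x y z t.
  exact: cont4.
split.
  have -> : dy (lin4 g c a b d e) = fun x y z t => (c*b) * derive1 g (a*x + b*y + d*z + e*t).
    by apply: funext => x; apply: funext => y; apply: funext => z; apply: funext => t;
       have [_ [[_ ->] _]] := P x y z t.
  exact: cont4.
split.
  have -> : dz (lin4 g c a b d e) = fun x y z t => (c*d) * derive1 g (a*x + b*y + d*z + e*t).
    by apply: funext => x; apply: funext => y; apply: funext => z; apply: funext => t;
       have [_ [_ [[_ ->] _]]] := P x y z t.
  exact: cont4.
have -> : dt (lin4 g c a b d e) = fun x y z t => (c*e) * derive1 g (a*x + b*y + d*z + e*t).
  by apply: funext => x; apply: funext => y; apply: funext => z; apply: funext => t;
     have [_ [_ [_ [_ ->]]]] := P x y z t.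
exact: cont4.
Qed.

Lemma C1_comp (g h : R -> R) : C1_1 g -> C1_1 h -> C1_1 (g \o h).
Proof.
move=> [dg cg] [dh ch].
have hc : continuous h.
  move=> s; apply: differentiable_continuous; apply/derivable1_diffP; exact: dh.
split.
  move=> s; apply/derivable1_diffP; apply: differentiable_comp; apply/derivable1_diffP => //.
have -> : derive1 (g \o h) = fun s => derive1 g (h s) * derive1 h s.
  by apply: funext => s; rewrite derive1_comp.
move=> s; apply: (@continuousM _ _ (fun s => derive1 g (h s)) (derive1 h)); last exact: ch.
exact: (continuous_comp (hc s) (cg _)).
Qed.

Lemma C1_expR : C1_1 (@expR R).
Proof.
split; first by move=> s; exact: derivable_expR.
have -> : derive1 (@expR R) = expR by apply: funext => s; rewrite derive1E derive_val.
exact: continuous_expR.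
Qed.

Lemma C1_cst (k : R) : C1_1 (fun _ => k).
Proof.
split; first by move=> s; exact: derivable_cst.
have -> : derive1 (fun _ : R => k) = fun _ => 0.
  by apply: funext => s; rewrite derive1E derive_cst.
by move=> s; exact: cvg_cst.
Qed.

Lemma C1_lin (a : R) : C1_1 (fun s => a * s).
Proof.
have hd : forall x : R, is_derive x 1 (fun s : R => a * s) a.
  move=> x; have := @is_deriveZ R R R id a x 1 1. rewrite /GRing.scale /= mulr1. apply.
split; first by move=> s; case: (hd s).
have -> : derive1 (fun s : R => a * s) = fun _ => a.
  by apply: funext => s; rewrite derive1E derive_val.
by move=> s; exact: cvg_cst.
Qed.

Lemma C1_sq : C1_1 (fun s : R => s * s).
Proof.
have hd : forall x : R, is_derive x 1 (fun s : R => s * s) (x + x).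
  move=> x; have := @is_deriveM R R id id x 1 1 1 (is_derive_id _ _) (is_derive_id _ _).
  by rewrite /GRing.scale /= mulr1.
split; first by move=> s; case: (hd s).
have -> : derive1 (fun s : R => s * s) = fun s => s + s.
  by apply: funext => s; rewrite derive1E derive_val.
move=> s; apply: continuousD; exact: cvg_id.
Qed.
Lemma limsup_ub (f : R -> \bar R) (A B : R) :
  (forall t, 0 < t -> (f t <= (A / t + B)%:E)%E) -> (limsup_pinfty f <= B%:E)%E.
Proof.
move=> hf; apply/lee_addgt0Pr => eps e0.
rewrite /limsup_pinfty limf_esupE; apply: ge_ereal_inf.
set M := `|A| / eps + 1.
exists (ereal_sup (f @` [set t | M < t])).
  exists [set t | M < t] => //; exists M; split => //; exact: num_real.
apply: ge_ereal_sup => _ [t tM <-].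
have hA : 0 <= `|A| / eps by rewrite divr_ge0 // ltW.
have M0 : 0 < M by rewrite /M; lra.
have tM' : M < t := tM.
have t0 : 0 < t by lra.
apply: le_trans (hf t t0) _.
rewrite -EFinD lee_fin; suff : A / t <= eps by lra.
rewrite ler_pdivrMr //.
apply: le_trans (ler_norm A) _.
have : `|A| / eps < t by rewrite /M in tM'; lra.
rewrite ltr_pdivrMr // mulrC => h; exact: ltW.
Qed.

Lemma limsup_lb (f : R -> \bar R) (T0 B : R) :
  (forall t, T0 < t -> (B%:E <= f t)%E) -> (B%:E <= limsup_pinfty f)%E.
Proof.
move=> hf; rewrite /limsup_pinfty limf_esupE; apply: le_ereal_inf_tmp => _ [V [M [_ hM]] <-].
apply: le_ereal_sup_tmp; exists (f (`|M| + `|T0| + 1)).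
  exists (`|M| + `|T0| + 1) => //; apply: hM.
  have := ler_norm M; have := normr_ge0 T0; lra.
apply: hf; have := ler_norm T0; have := normr_ge0 M; lra.
Qed.

Lemma ereal_all_le (x : \bar R) : (forall r : R, (r%:E <= x)%E) -> x = +oo%E.
Proof.
case: x => [r| |] // h.
  by have := h (r + 1)%R; rewrite lee_fin => H; exfalso; lra.
by have := h 0.
Qed.

Lemma limsup_inf (f : R -> \bar R) (k : R) : 0 < k ->
  (forall t, 0 < t -> ((k * t)%:E <= f t)%E) -> limsup_pinfty f = +oo%E.
Proof.
move=> k0 hf; apply: ereal_all_le => r.
apply: (@limsup_lb f (`|r| / k)) => t ht.
have t0 : 0 < t by apply: le_lt_trans ht; rewrite divr_ge0 // ltW.
apply: le_trans (hf t t0); rewrite lee_fin.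
apply: le_trans (ler_norm r) _.
move: ht; rewrite ltr_pdivrMr // mulrC => h; exact: ltW.
Qed.

Lemma growth_exp_ub (lam c a b d e : R) :
  (growth_comp (lin4 (expR \o (fun s => (lam * s)%R)) c a b d e) <= (lam * e)%:E)%E.
Proof.
apply: ge_ereal_sup => _ [q _ <-].
apply: (@limsup_ub _ (ln `|c| + lam * (a*q.1.1 + b*q.1.2 + d*q.2))) => t t0.
rewrite /lin4 /eln_abs /=.
have [->|c0] := eqVneq c 0.
  by rewrite mul0r eqxx /= gt0_mulNye ?lte_fin ?invr_gt0 // leNye.
rewrite mulf_eq0 (negbTE c0) expR_eq0 /=.
rewrite normrM (ger0_norm (expR_ge0 _)) lnM ?posrE ?normr_gt0 ?expR_gt0 // expRK.
rewrite -EFinM lee_fin le_eqVlt; apply/orP; left; apply/eqP.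
field; exact: lt0r_neq0.
Qed.

Lemma growth_exp_lb (lam a b d e : R) :
  (((lam * e)%R)%:E <= growth_comp (lin4 (expR \o (fun s => (lam * s)%R)) (-1)%R a b d e))%E.
Proof.
apply: le_ereal_sup_tmp.
eexists; first by exists (0, 0, 0).
apply: (@limsup_lb _ 0) => t t0.
rewrite /lin4 /eln_abs /=.
rewrite mulN1r oppr_eq0 expR_eq0 /= normrN (ger0_norm (expR_ge0 _)) expRK.
rewrite -EFinM lee_fin le_eqVlt; apply/orP; left; apply/eqP.
field; exact: lt0r_neq0.
Qed.

Lemma growth_sq_inf (a b d e : R) : e != 0 ->
  growth_comp (lin4 (expR \o (fun s => s * s)) (-1) a b d e) = +oo%E.
Proof.
move=> e0; apply: ereal_supy.
exists (0, 0, 0) => //.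
apply: (@limsup_inf _ (e * e)).
  by rewrite -expr2 lt_def sqrf_eq0 e0 sqr_ge0.
move=> t t0.
rewrite /lin4 /eln_abs /=.
rewrite mulN1r oppr_eq0 expR_eq0 /= normrN (ger0_norm (expR_ge0 _)) expRK.
rewrite -EFinM lee_fin le_eqVlt; apply/orP; left; apply/eqP.
field; exact: lt0r_neq0.
Qed.

Lemma construct (g : R -> R) (hg : C1_1 g) (U0 c0 rho0 : R)
  (k1 k2 k3 k4 l1 l2 l3 l4 m1 m2 m3 m4 : R) :
  k3 != 0 -> rho0 != 0 ->
  let e := - (U0 * k3) in
  let vx := lin4 g (l3 / k3) k3 l3 m3 e in
  let vy := lin4 g (-1) k3 l3 m3 e in
  let vz := lin4 g 0 k3 l3 m3 e in
  let p := lin4 g 0 k3 l3 m3 e in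
  in_Z1 c0 rho0 k1 k2 k3 k4 l1 l2 l3 l4 m1 m2 m3 m4
    (fun x y z => vx x y z 0) (fun x y z => vy x y z 0)
    (fun x y z => vz x y z 0) (fun x y z => p x y z 0) /\
  lin_euler_solution U0 c0 rho0 vx vy vz p /\
  has_initial_value vx vy vz p
    (fun x y z => vx x y z 0) (fun x y z => vy x y z 0)
    (fun x y z => vz x y z 0) (fun x y z => p x y z 0).
Proof.
move=> k30 r0 e vx vy vz p.
split.
  exists (fun _ => 0), (fun _ => 0), g, (fun _ => 0).
  do 4 (split; first by (exact: hg || exact: C1_cst)).
  rewrite /= /vx /vy /vz /p /lin4.
  split; [|split; [|split]] => x y z; rewrite !mulr0 ?addr0; ring.
split; last by [].
have dg := hg.1.
split; first exact: lin4_C1.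
split; first exact: lin4_C1.
split; first exact: lin4_C1.
split; first exact: lin4_C1.
move=> x y z t.
have [[_ ex1] [[_ ey1] [[_ ez1] [_ et1]]]] := lin4_parts g dg (l3 / k3) k3 l3 m3 e x y z t.
have [[_ ex2] [[_ ey2] [[_ ez2] [_ et2]]]] := lin4_parts g dg (-1) k3 l3 m3 e x y z t.
have [[_ ex3] [[_ ey3] [[_ ez3] [_ et3]]]] := lin4_parts g dg 0 k3 l3 m3 e x y z t.
rewrite /vx /vy /vz /p ?ex1 ?ey1 ?ez1 ?et1 ?ex2 ?ey2 ?ez2 ?et2 ?ex3 ?ey3 ?ez3 ?et3 /e.
split; [|split; [|split]]; field.
all: by rewrite ?r0 ?k30.
Qed.
End S.

Theorem proposition13 (R : realType) (U0 c0 rho0 : R)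
  (k1 k2 k3 k4 l1 l2 l3 l4 m1 m2 m3 m4 : R) :
  0 < U0 -> 0 < c0 -> 0 < rho0 ->
  k1 * k2 * k3 * k4 != 0 ->
  Delta_Z1 c0 rho0 k1 k2 k3 k4 l1 l2 l3 l4 m1 m2 m3 m4 != 0 ->
  (forall mu : R,
     exists (F G H P : field3 R) (vx vy vz p : field4 R),
       in_Z1 c0 rho0 k1 k2 k3 k4 l1 l2 l3 l4 m1 m2 m3 m4 F G H P /\
       lin_euler_solution U0 c0 rho0 vx vy vz p /\
       has_initial_value vx vy vz p F G H P /\
       growth_rate vx vy vz p = mu%:E) /\
  (exists (F G H P : field3 R) (vx vy vz p : field4 R),
       in_Z1 c0 rho0 k1 k2 k3 k4 l1 l2 l3 l4 m1 m2 m3 m4 F G H P /\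
       lin_euler_solution U0 c0 rho0 vx vy vz p /\
       has_initial_value vx vy vz p F G H P /\
       growth_rate vx vy vz p = +oo%E).
Proof.
move=> U00 c00 r00 hk _.
have k30 : k3 != 0 by move: hk; rewrite !mulf_eq0 !negb_or => /andP[/andP[_ ->]].
have r0 : rho0 != 0 by exact: lt0r_neq0.
have e0 : - (U0 * k3) != 0 by rewrite oppr_eq0 mulf_neq0 // lt0r_neq0.
split.
  move=> mu.
  set lam := mu / (- (U0 * k3)).
  have hlam : lam * (- (U0 * k3)) = mu by rewrite /lam divfK.
  have hg := @C1_comp R _ _ (@C1_expR R) (@C1_lin R lam).
  have [A [B C]] := @construct R _ hg U0 c0 rho0 k1 k2 k3 k4 l1 l2 l3 l4 m1 m2 m3 m4 k30 r0.
  do 8 eexists; split; first exact: A.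
  split; first exact: B.
  split; first exact: C.
  rewrite /growth_rate -hlam.
  apply/eqP; rewrite eq_le; apply/andP; split.
    rewrite !ge_max !growth_exp_ub //.
  rewrite !le_max growth_exp_lb //= orbT //.
have hg := @C1_comp R _ _ (@C1_expR R) (@C1_sq R).
have [A [B C]] := @construct R _ hg U0 c0 rho0 k1 k2 k3 k4 l1 l2 l3 l4 m1 m2 m3 m4 k30 r0.
do 8 eexists; split; first exact: A.
split; first exact: B.
split; first exact: C.
rewrite /growth_rate.
apply/eqP; rewrite -leye_eq !le_max growth_sq_inf // leey /= orbT //.
Qed.
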